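(* Let $n\ge1$, let $\mathcal{Z}=\{z_1,\dots,z_m\}\subset\mathbb{D}^n$ be distinct points, $\mathcal{Q}_{\mathcal{Z}}=\operatorname{span}\{\mathbb{S}(\cdot,z_j):j=1,\dots,m\}$, and $X\in\mathcal{B}(\mathcal{Q}_{\mathcal{Z}})$. Then $XS_{z_i}=S_{z_i}X$ for all $i=1,\dots,n$ (where $S_{z_i}=P_{\mathcal{Q}_{\mathcal{Z}}}T_{z_i}|_{\mathcal{Q}_{\mathcal{Z}}}$) if and only if there exist $w_1,\dots,w_m\in\mathbb{C}$ such that $X^*\mathbb{S}(\cdot,z_j)=w_j\mathbb{S}(\cdot,z_j)$ for all $j=1,\dots,m$.
   Context: $\mathbb{S}(z,w)=\prod_{i=1}^n(1-z_i\bar w_i)^{-1}$ is the Szegő kernel of $\mathbb{D}^n$ and $\mathbb{S}(\cdot,w)(z)=\mathbb{S}(z,w)$, an element of the Hardy space $H^2(\mathbb{T}^n)$. $T_{z_i}$ is multiplication by $z_i$ on $H^2(\mathbb{T}^n)$ and $P_{\mathcal{Q}_{\mathcal{Z}}}$ the orthogonal projection onto $\mathcal{Q}_{\mathcal{Z}}$. *)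

(* Defs.v *)
From Stdlib Require Import ClassicalEpsilon.
From HB Require Import structures.
From mathcomp Require Import all_boot all_order all_algebra.
From mathcomp Require Import all_classical all_reals all_analysis.
From mathcomp Require Import complex.

Set Implicit Arguments.
Unset Strict Implicit.
Unset Printing Implicit Defensive.

Import Order.TTheory GRing.Theory Num.Theory numFieldNormedType.Exports.
Local Open Scope ring_scope.

(** Model of the Hardy space H^2(T^n): an element f of H^2 is identified with
    its family of Taylor/Fourier coefficients (f_alpha)_{alpha in N^n},
    f(z) = sum_alpha f_alpha z^alpha, and <f,g> = sum_alpha f_alpha conj(g_alpha). *)

Definition mindex (n : nat) := 'I_n -> nat.

Definition coef (R : realType) (n : nat) := mindex n -> R[i].

Definition box_sum (R : realType) (n : nat) (F : mindex n -> R[i]) (N : nat) : R[i] :=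
  \sum_(a : {ffun 'I_n -> 'I_N}) F (fun i => nat_of_ord (a i)).

Definition inH2 (R : realType) (n : nat) (f : coef R n) : Prop :=
  exists M : R, forall N : nat,
    complex.Re (box_sum (fun a => f a * (f a)^*) N) <= M.

Definition h2inner (R : realType) (n : nat) (f g : coef R n) : R[i] :=
  let s := box_sum (fun a => f a * (g a)^*) in
  Complex (limn (fun N => complex.Re (s N) : R)) (limn (fun N => complex.Im (s N) : R)).

(** Szego kernel S(., w) = prod_i (1 - z_i conj(w_i))^{-1}
    = sum_alpha conj(w)^alpha z^alpha *)
Definition szego (R : realType) (n : nat) (w : 'I_n -> R[i]) : coef R n :=
  fun a => \prod_(i < n) ((w i)^*) ^+ (a i).

(** multiplication by the coordinate function z_i: T_{z_i} *)
Definition Tz (R : realType) (n : nat) (i : 'I_n) (f : coef R n) : coef R n :=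
  fun a => if a i == 0%N then 0
           else f (fun k => if k == i then (a k).-1 else a k).

Definition QZ (R : realType) (n m : nat) (z : 'I_m -> 'I_n -> R[i]) (f : coef R n) : Prop :=
  exists c : 'I_m -> R[i], f = fun a => \sum_(j < m) c j * szego (z j) a.

Definition PQ (R : realType) (n m : nat) (z : 'I_m -> 'I_n -> R[i]) (g : coef R n) : coef R n :=
  epsilon (inhabits (fun _ => 0))
    (fun p => QZ z p /\ forall q, QZ z q -> h2inner (fun a => g a - p a) q = 0).

Definition Sz (R : realType) (n m : nat) (z : 'I_m -> 'I_n -> R[i]) (i : 'I_n)
  (f : coef R n) : coef R n := PQ z (Tz i f).

(** bounded operators on Q_Z (finite-dimensional, so = linear maps Q_Z -> Q_Z);
    X is a function on coefficient families whose values off Q_Z are irrelevant *)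
Definition is_op_QZ (R : realType) (n m : nat) (z : 'I_m -> 'I_n -> R[i])
  (X : coef R n -> coef R n) : Prop :=
  (forall f, QZ z f -> QZ z (X f)) /\
  (forall (c : R[i]) f g, QZ z f -> QZ z g ->
     X (fun a => c * f a + g a) = (fun a => c * X f a + X g a)).

Definition adjQZ (R : realType) (n m : nat) (z : 'I_m -> 'I_n -> R[i])
  (X : coef R n -> coef R n) (g : coef R n) : coef R n :=
  epsilon (inhabits (fun _ => 0))
    (fun h => QZ z h /\ forall f, QZ z f -> h2inner (X f) g = h2inner f h).

Definition in_polydisc (R : realType) (n : nat) (w : 'I_n -> R[i]) : Prop :=
  forall i, `|w i| < 1.

(* Main.v *)
Require Import Defs.
From Stdlib Require Import ClassicalEpsilon.
From HB Require Import structures.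
From mathcomp Require Import all_boot all_order all_algebra.
From mathcomp Require Import all_classical all_reals all_analysis.
From mathcomp Require Import complex.
From mathcomp Require Import ring.
Import Order.TTheory GRing.Theory Num.Theory numFieldTopology.Exports numFieldNormedType.Exports.
Local Open Scope classical_set_scope.
Local Open Scope complex_scope.
Local Open Scope ring_scope.

Set Implicit Arguments.
Unset Strict Implicit.
Unset Printing Implicit Defensive.

HB.instance Definition _ (R : realType) := NormedModule.copy R[i] (R[i])^o.

Section A.
Variable R : realType.
Implicit Types (u : nat -> R[i]).

Lemma normC_Re (x : R[i]) : `|complex.Re x|%:C <= `|x|.
Proof. exact: normc_ge_Re. Qed.

Lemma normC_Im (x : R[i]) : `|complex.Im x|%:C <= `|x|.
Proof.
rewrite normc_def lecR -(sqrtr_sqr (complex.Im x)).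
by apply: ler_wsqrtr; rewrite lerDr sqr_ge0.
Qed.

Lemma cvg_ReC u L : u @ \oo --> L -> (fun N => complex.Re (u N)) @ \oo --> complex.Re L.
Proof.
move=> /cvgrPdist_lt H; apply/cvgrPdist_lt => e e0.
have e0' : (0 : R[i]) < e%:C by rewrite ltcR.
apply: filterS (H _ e0') => N HN.
rewrite -raddfB /= -ltcR; exact: le_lt_trans (normC_Re _) HN.
Qed.

Lemma cvg_ImC u L : u @ \oo --> L -> (fun N => complex.Im (u N)) @ \oo --> complex.Im L.
Proof.
move=> /cvgrPdist_lt H; apply/cvgrPdist_lt => e e0.
have e0' : (0 : R[i]) < e%:C by rewrite ltcR.
apply: filterS (H _ e0') => N HN.
rewrite -raddfB /= -ltcR; exact: le_lt_trans (normC_Im _) HN.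
Qed.

Lemma h2inner_cvg n (f g : coef R n) L :
  (fun N => box_sum (fun a => f a * (g a)^*) N) @ \oo --> L -> h2inner f g = L.
Proof.
move=> H; rewrite /h2inner.
rewrite (cvg_lim _ (cvg_ReC H)) // (cvg_lim _ (cvg_ImC H)) //.
by case: L {H}.
Qed.


Lemma cvg_RC (r : nat -> R) : r @ \oo --> (0:R) -> (fun N => (r N)%:C) @ \oo --> (0 : R[i]).
Proof.
move=> /cvgrPdist_lt H; apply/cvgrPdist_lt => e e0.
move: (e0); rewrite ltcE /= => /andP[/eqP Ie Re0].
apply: filterS (H _ Re0) => N HN.
have -> : e = (complex.Re e)%:C by case: e Ie {e0 Re0 HN} => a b /= ->.
rewrite -rmorphB /= normc_def /= expr0n /= addr0 sqrtr_sqr ltcR //.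
Qed.

Lemma cvg_geoC (q : R[i]) : `|q| < 1 -> (fun N => q ^+ N) @ \oo --> (0 : R[i]).
Proof.
move=> q1.
set r := complex.Re `|q|.
have qr : `|q| = r%:C.
  have : `|q| \is Num.real by apply: normr_real.
  by move/RRe_real.
have r0 : 0 <= r.
  by have := normr_ge0 q; rewrite lecE => /andP[_].
have r1 : `|r| < 1.
  rewrite ger0_norm //.
  by move: q1; rewrite qr ltcE => /andP[_].
apply: norm_cvg0.
have -> : (fun x => `|q ^+ x|) = (fun N => (r ^+ N)%:C).
  by apply: funext => N; rewrite normrX qr rmorphXn.
exact: cvg_RC (cvg_expr r1).
Qed.

Lemma cvg_geosum (q : R[i]) : `|q| < 1 ->
  (fun N => \sum_(t < N) q ^+ t) @ \oo --> (1 - q)^-1.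
Proof.
move=> q1.
have q1' : 1 - q != 0.
  rewrite subr_eq0; apply/eqP => h; move: q1; rewrite -h normr1 ltxx //.
have -> : (fun N => \sum_(t < N) q ^+ t) = (fun N => (1 - q ^+ N) * (1 - q)^-1).
  apply: funext => N; apply: (mulIf q1'); rewrite -mulrA mulVf // mulr1.
  have := subrX1 q N; move=> /(congr1 -%R); rewrite !opprB => ->.
  by rewrite -mulNr opprB mulrC.
have H := cvgM (cvgB (cvg_cst (1:R[i])) (cvg_geoC q1)) (cvg_cst ((1 - q)^-1 : R[i])).
rewrite subr0 mul1r in H; exact: H.
Qed.

Lemma cvg_bigsum (I : Type) (r : seq I) (u : I -> nat -> R[i]) (l : I -> R[i]) :
  (forall i, u i @ \oo --> l i) ->
  (fun N => \sum_(i <- r) u i N) @ \oo --> \sum_(i <- r) l i.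
Proof.
move=> H; elim: r => [|a r IH].
  rewrite big_nil; under eq_fun do rewrite big_nil; exact: cvg_cst.
rewrite big_cons; under eq_fun do rewrite big_cons.
exact: cvgD (H a) IH.
Qed.

Lemma cvg_bigprod (I : Type) (r : seq I) (u : I -> nat -> R[i]) (l : I -> R[i]) :
  (forall i, u i @ \oo --> l i) ->
  (fun N => \prod_(i <- r) u i N) @ \oo --> \prod_(i <- r) l i.
Proof.
move=> H; elim: r => [|a r IH].
  rewrite big_nil; under eq_fun do rewrite big_nil; exact: cvg_cst.
rewrite big_cons; under eq_fun do rewrite big_cons.
exact: cvgM (H a) IH.
Qed.

Lemma cvgMc (c : R[i]) (u : nat -> R[i]) a : u @ \oo --> a -> (fun N => c * u N) @ \oo --> c * a.
Proof. move=> H; have H2 := cvgM (cvg_cst c) H; exact: H2. Qed.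
Lemma cvgB' (u v : nat -> R[i]) a b : u @ \oo --> a -> v @ \oo --> b -> (fun N => u N - v N) @ \oo --> a - b.
Proof. move=> H1 H2; have H := cvgB H1 H2; exact: H. Qed.

End A.

Section B.
Variable R : realType.
Variables (n m : nat) (z : 'I_m -> 'I_n -> R[i]).
Hypothesis hz : forall j, in_polydisc (z j).

Definition G j k := \prod_(i < n) (1 - (z j i)^* * z k i)^-1.
Definition comb (c : 'I_m -> R[i]) : coef R n := fun a => \sum_j c j * szego (z j) a.
Definition Gv (c : 'I_m -> R[i]) k := \sum_j c j * G j k.

Lemma box_sum_prod (h : 'I_n -> nat -> R[i]) N :
  box_sum (fun a => \prod_i h i (a i)) N = \prod_i \sum_(t < N) h i t.
Proof.
rewrite /box_sum (bigA_distr_bigA (fun i (t : 'I_N) => h i t)) //.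
Qed.

Lemma box_sum_sum (I : finType) (F : I -> mindex n -> R[i]) N :
  box_sum (fun a => \sum_p F p a) N = \sum_p box_sum (F p) N.
Proof. by rewrite /box_sum exchange_big. Qed.

Lemma box_sumZ c (F : mindex n -> R[i]) N :
  box_sum (fun a => c * F a) N = c * box_sum F N.
Proof. by rewrite /box_sum mulr_sumr. Qed.

Lemma box_sumB (F H : mindex n -> R[i]) N :
  box_sum (fun a => F a - H a) N = box_sum F N - box_sum H N.
Proof. by rewrite /box_sum sumrB. Qed.

Lemma box_sum_ext (F H : mindex n -> R[i]) N :
  (forall a, F a = H a) -> box_sum F N = box_sum H N.
Proof. by move=> e; rewrite /box_sum; apply: eq_bigr => a _; rewrite e. Qed.

Lemma conj_szego (w : 'I_n -> R[i]) a : (szego w a)^* = \prod_i (w i) ^+ (a i).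
Proof.
rewrite /szego rmorph_prod; apply: eq_bigr => i _.
by rewrite rmorphXn /= conjCK.
Qed.

Lemma norm_lt1 j k i : `|(z j i)^* * z k i| < 1.
Proof.
rewrite normrM norm_conjC.
have h1 := hz j i; have h2 := hz k i.
apply: le_lt_trans h1; rewrite ler_piMr //; exact: ltW.
Qed.

Lemma cvg_SS j k :
  (fun N => box_sum (fun a => szego (z j) a * (szego (z k) a)^*) N) @ \oo --> G j k.
Proof.
have E N : box_sum (fun a => szego (z j) a * (szego (z k) a)^*) N =
    \prod_i \sum_(t < N) ((z j i)^* * z k i) ^+ t.
  rewrite -(box_sum_prod (fun i t => ((z j i)^* * z k i) ^+ t)).
  apply: box_sum_ext => a.
  rewrite conj_szego /szego -big_split /=.
  by apply: eq_bigr => i _; rewrite exprMn.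
rewrite (funext E).
apply: cvg_bigprod => i.
exact: cvg_geosum (norm_lt1 j k i).
Qed.


Lemma cvg_TS i j k :
  (fun N => box_sum (fun a => Tz i (szego (z j)) a * (szego (z k) a)^*) N) @ \oo
    --> z k i * G j k.
Proof.
pose h (l : 'I_n) (t : nat) := if l == i then
    (if t == 0%N then 0 else (z j l)^* ^+ t.-1 * z k l ^+ t)
  else ((z j l)^* * z k l) ^+ t.
have E N : box_sum (fun a => Tz i (szego (z j)) a * (szego (z k) a)^*) N =
    \prod_l \sum_(t < N) h l t.
  rewrite -(box_sum_prod h); apply: box_sum_ext => a.
  rewrite /Tz; case: ifP => [/eqP a0 | a0].
    by rewrite mul0r (bigD1 i) //= /h eqxx a0 eqxx mul0r.
  rewrite conj_szego /szego -big_split /=.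
  apply: eq_bigr => l _; rewrite /h; case: eqP => [-> | _].
    by rewrite a0.
  by rewrite exprMn.
rewrite (funext E).
have -> : z k i * G j k = \prod_l (if l == i then z k i * (1 - (z j l)^* * z k l)^-1
    else (1 - (z j l)^* * z k l)^-1).
  rewrite /G (bigD1 i) //= [in RHS](bigD1 i) //= eqxx mulrA; congr (_ * _).
  by apply: eq_bigr => l /negbTE ->.
apply: cvg_bigprod => l; rewrite /h.
case: eqP => [-> | _]; last exact: cvg_geosum (norm_lt1 j k l).
rewrite -cvg_shiftS /=.
have -> : (fun N => \sum_(t < N.+1) (if t == 0%N :> nat then 0
     else (z j i)^* ^+ t.-1 * z k i ^+ t)) =
   (fun N => z k i * \sum_(t < N) ((z j i)^* * z k i) ^+ t).
  apply: funext => N; rewrite big_ord_recl /= add0r mulr_sumr.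
  by apply: eq_bigr => t _; rewrite /= exprS exprMn mulrCA.
exact: (cvgM (cvg_cst (z k i : R[i])) (cvg_geosum (norm_lt1 j k i))).
Qed.


Lemma cvg_IP c d :
  (fun N => box_sum (fun a => comb c a * (comb d a)^*) N) @ \oo
    --> \sum_k (d k)^* * Gv c k.
Proof.
have E N : box_sum (fun a => comb c a * (comb d a)^*) N =
   \sum_j \sum_k (c j * (d k)^*) *
      box_sum (fun a => szego (z j) a * (szego (z k) a)^*) N.
  transitivity (box_sum (fun a => \sum_j \sum_k (c j * (d k)^*) *
      (szego (z j) a * (szego (z k) a)^*)) N).
    apply: box_sum_ext => a.
    rewrite /comb rmorph_sum /= mulr_suml; apply: eq_bigr => j _.
    rewrite mulr_sumr; apply: eq_bigr => k _.
    by rewrite rmorphM /= mulrACA.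
  rewrite box_sum_sum; apply: eq_bigr => j _.
  rewrite box_sum_sum; apply: eq_bigr => k _.
  by rewrite box_sumZ.
rewrite (funext E).
have -> : \sum_k (d k)^* * Gv c k = \sum_j \sum_k (c j * (d k)^*) * G j k.
  rewrite exchange_big /=; apply: eq_bigr => k _.
  rewrite /Gv mulr_sumr; apply: eq_bigr => j _.
  by rewrite mulrA [_ * c j]mulrC.
apply: cvg_bigsum => j; apply: cvg_bigsum => k.
exact: cvgMc (@cvg_SS j k).
Qed.

Lemma Tz_comb i c a : Tz i (comb c) a = \sum_j c j * Tz i (szego (z j)) a.
Proof.
rewrite /Tz; case: ifP => // _.
by rewrite big1 // => j _; rewrite mulr0.
Qed.

Lemma cvg_IPT i c e d :
  (fun N => box_sum (fun a => (Tz i (comb c) a - comb e a) * (comb d a)^*) N) @ \oo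
    --> \sum_k (d k)^* * (z k i * Gv c k - Gv e k).
Proof.
have E N : box_sum (fun a => (Tz i (comb c) a - comb e a) * (comb d a)^*) N =
   \sum_j \sum_k ((c j * (d k)^*) *
      box_sum (fun a => Tz i (szego (z j)) a * (szego (z k) a)^*) N -
      (e j * (d k)^*) * box_sum (fun a => szego (z j) a * (szego (z k) a)^*) N).
  transitivity (box_sum (fun a => \sum_j \sum_k ((c j * (d k)^*) *
      (Tz i (szego (z j)) a * (szego (z k) a)^*) -
      (e j * (d k)^*) * (szego (z j) a * (szego (z k) a)^*))) N).
    apply: box_sum_ext => a.
    rewrite Tz_comb /comb -sumrB rmorph_sum /= mulr_suml; apply: eq_bigr => j _.
    rewrite mulr_sumr; apply: eq_bigr => k _.
    rewrite rmorphM /=; ring.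
  rewrite box_sum_sum; apply: eq_bigr => j _.
  rewrite box_sum_sum; apply: eq_bigr => k _.
  by rewrite box_sumB !box_sumZ.
rewrite (funext E).
have -> : \sum_k (d k)^* * (z k i * Gv c k - Gv e k) =
    \sum_j \sum_k ((c j * (d k)^*) * (z k i * G j k) - (e j * (d k)^*) * G j k).
  rewrite exchange_big /=; apply: eq_bigr => k _.
  rewrite sumrB /Gv mulrBr; congr (_ - _).
    rewrite !mulr_sumr; apply: eq_bigr => j _; ring.
  rewrite mulr_sumr; apply: eq_bigr => j _; ring.
apply: cvg_bigsum => j; apply: cvg_bigsum => k.
apply: cvgB'; apply: cvgMc; [exact: (@cvg_TS i j k) | exact: (@cvg_SS j k)].
Qed.


Lemma ip_comb c d : h2inner (comb c) (comb d) = \sum_k (d k)^* * Gv c k.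
Proof. exact: h2inner_cvg (@cvg_IP c d). Qed.

Lemma ipT i c e d : h2inner (fun a => Tz i (comb c) a - comb e a) (comb d) =
  \sum_k (d k)^* * (z k i * Gv c k - Gv e k).
Proof. exact: h2inner_cvg (@cvg_IPT i c e d). Qed.

Lemma szego_comb k : szego (z k) = comb (fun j => (j == k)%:R).
Proof.
apply: funext => a; rewrite /comb (bigD1 k) //= eqxx mul1r big1 ?addr0 //.
by move=> j /negbTE ->; rewrite mul0r.
Qed.

Lemma sum_delta (w : 'I_m -> R[i]) k : \sum_l ((l == k)%:R)^* * w l = w k.
Proof.
rewrite (bigD1 k) //= eqxx rmorph1 mul1r big1 ?addr0 //.
by move=> j /negbTE ->; rewrite rmorph0 mul0r.
Qed.

Lemma Re_sum (I : finType) (F : I -> R[i]) :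
  complex.Re (\sum_p F p) = \sum_p complex.Re (F p).
Proof. by apply: (big_morph (@complex.Re R)) => // -[a b] [c d]. Qed.

Lemma Re_normsq (x : R[i]) : complex.Re (x * x^*) = (complex.Re `|x|) ^+ 2.
Proof.
rewrite -normCK.
have : `|x| \is Num.real by apply: normr_real.
move/RRe_real => {1}<-; by rewrite -rmorphXn.
Qed.

Lemma comb_zero c : h2inner (comb c) (comb c) = 0 -> forall a, comb c a = 0.
Proof.
move=> h0 b.
have H := @cvg_IP c c.
have L0 : \sum_k (c k)^* * Gv c k = 0 by rewrite -ip_comb.
rewrite L0 in H.
have HR := cvg_ReC H.
set x := comb c b.
set t := complex.Re `|x|.
have t0 : 0 <= t by have := normr_ge0 x; rewrite lecE => /andP[_].
have key : t ^+ 2 <= 0.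
  have := @limr_ge _ _ _ _ (t ^+ 2) _ (cvgP _ HR).
  rewrite (cvg_lim _ HR) //=; apply.
  exists (\sum_i b i).+1 => // N /= HN.
  have hb : forall i, (b i < N)%N.
    move=> i; apply: leq_trans HN; rewrite ltnS (bigD1 i) //=; exact: leq_addr.
  pose f0 : {ffun 'I_n -> 'I_N} := [ffun i => Ordinal (hb i)].
  rewrite /box_sum Re_sum (bigD1 f0) //=.
  have -> : (fun i => nat_of_ord (f0 i)) = b by apply: funext => i; rewrite ffunE.
  rewrite -/x Re_normsq -/t lerDl; apply: sumr_ge0 => f _.
  by rewrite Re_normsq sqr_ge0.
have : t = 0.
  by apply/eqP; rewrite -sqrf_eq0 eq_le key sqr_ge0.
move=> tz.
have : `|x| = 0.
  have : `|x| \is Num.real by apply: normr_real.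
  by move/RRe_real => <-; rewrite -/t tz.
by move/eqP; rewrite normr_eq0 => /eqP.
Qed.

Lemma Gv_zero c : (forall k, Gv c k = 0) -> forall a, comb c a = 0.
Proof.
move=> h; apply: comb_zero; rewrite ip_comb big1 // => k _; by rewrite h mulr0.
Qed.


Definition upd (a : mindex n) (i : 'I_n) : mindex n :=
  fun l => if l == i then (a l).+1 else a l.

Lemma szego_upd (w : 'I_n -> R[i]) a i : szego w (upd a i) = (w i)^* * szego w a.
Proof.
rewrite /szego (bigD1 i) //= [in RHS](bigD1 i) //= /upd eqxx exprS -mulrA.
congr (_ * (_ * _)); apply: eq_bigr => l /negbTE ->; done.
Qed.

Definition Dop (l : 'I_m) (i : 'I_n) (F : coef R n) : coef R n :=
  fun a => F (upd a i) - (z l i)^* * F a.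

Lemma Dop_comb l i c :
  Dop l i (comb c) = comb (fun j => c j * ((z j i)^* - (z l i)^*)).
Proof.
apply: funext => a; rewrite /Dop /comb mulr_sumr -sumrB; apply: eq_bigr => j _.
rewrite szego_upd; ring.
Qed.

Lemma comb_ext c d : (forall j, c j = d j) -> comb c = comb d.
Proof. by move=> e; apply: funext => a; apply: eq_bigr => j _; rewrite e. Qed.

Lemma op_comb (idx : 'I_m -> 'I_n) s c :
  foldr (fun l F => Dop l (idx l) F) (comb c) s =
  comb (fun j => c j * \prod_(l <- s) ((z j (idx l))^* - (z l (idx l))^*)).
Proof.
elim: s => [|l s IH] /=.
  by apply: comb_ext => j; rewrite big_nil mulr1.
rewrite IH Dop_comb; apply: comb_ext => j; rewrite big_cons; ring.
Qed.

Lemma comb_at0 c : comb c (fun _ => 0%N) = \sum_j c j.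
Proof.
apply: eq_bigr => j _; rewrite /szego big1 ?mulr1 // => i _; exact: expr0.
Qed.

Lemma lin_indep : (0 < n)%N -> injective z ->
  forall c, (forall a, comb c a = 0) -> forall k, c k = 0.
Proof.
move=> n0 zinj c hc k.
pose i0 : 'I_n := Ordinal n0.
pose idx l := odflt i0 [pick i | z l i != z k i].
have hidx : forall l, l != k -> z l (idx l) != z k (idx l).
  move=> l lk; rewrite /idx; case: pickP => [i //|H].
  exfalso; move/eqP: lk; apply; apply: zinj; apply: funext => i.
  by apply/eqP; move: (H i) => /negbFE.
pose s := [seq l <- enum 'I_m | l != k].
have E : comb c = comb (fun _ => 0).
  apply: funext => a; rewrite hc /comb big1 // => j _; exact: mul0r.
have := congr1 (fun F => foldr (fun l F => Dop l (idx l) F) F s (fun _ => 0%N)) E.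
rewrite /= !op_comb !comb_at0 [in RHS]big1; last by move=> j _; rewrite mul0r.
rewrite (bigD1 k) //= [X in _ + X]big1 ?addr0; last first.
  move=> j jk; apply/eqP;  rewrite mulf_eq0 prodf_seq_eq0; apply/orP; right.
  apply/hasP; exists j; first by rewrite mem_filter jk mem_enum.
  by rewrite subrr eqxx.
move/eqP; rewrite mulf_eq0 => /orP[/eqP //|].
move=> Hp; exfalso; move: Hp; apply/negP.
rewrite prodf_seq_neq0; apply/allP => l.
rewrite mem_filter => /andP[lk _] /=.
rewrite subr_eq0 (inj_eq (can_inj (@conjCK _))) eq_sym; exact: hidx.
Qed.


Hypothesis n0 : (0 < n)%N.
Hypothesis zinj : injective z.

Lemma Gm_unit : (\matrix_(j, k) G j k) \in unitmx.
Proof.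
rewrite -row_free_unit; apply: inj_row_free => v hv.
have hG : forall k, Gv (fun j => v 0 j) k = 0.
  move=> k; have := congr1 (fun M : 'M[R[i]]_(1, m) => M 0 k) hv; rewrite !mxE => <-.
  by apply: eq_bigr => j _; rewrite mxE.
have h := lin_indep n0 zinj (Gv_zero hG).
by apply/rowP => j; rewrite mxE h.
Qed.

Lemma Gsolve (v : 'I_m -> R[i]) : exists e, forall k, Gv e k = v k.
Proof.
set A := \matrix_(j, k) G j k.
exists (fun j => ((\row_k v k) *m invmx A) 0 j) => k.
have := congr1 (fun M : 'M[R[i]]_(1, m) => M 0 k) (mulmxKV Gm_unit (\row_k v k)).
rewrite !mxE => <-; rewrite /Gv /A; apply: eq_bigr => j _.
by rewrite ?mxE.
Qed.

Lemma Gsolve_col (v : 'I_m -> R[i]) : exists y, forall j, \sum_l G j l * (y l)^* = v j.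
Proof.
set A := \matrix_(j, k) G j k.
exists (fun l => ((invmx A *m \col_j v j) l 0)^*) => j.
have := congr1 (fun M : 'M[R[i]]_(m, 1) => M j 0) (mulKVmx Gm_unit (\col_j v j)).
rewrite !mxE => <-; rewrite /A; apply: eq_bigr => l _.
by rewrite conjCK ?mxE.
Qed.

Lemma comb_sub (u v : 'I_m -> R[i]) a : comb (fun j => u j - v j) a = comb u a - comb v a.
Proof. by rewrite /comb -sumrB; apply: eq_bigr => j _; rewrite mulrBl. Qed.

Lemma Gv_sub (u v : 'I_m -> R[i]) k : Gv (fun j => u j - v j) k = Gv u k - Gv v k.
Proof. by rewrite /Gv -sumrB; apply: eq_bigr => j _; rewrite mulrBl. Qed.

Lemma Gv_h2 c k : Gv c k = h2inner (comb c) (szego (z k)).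
Proof. by rewrite szego_comb ip_comb sum_delta. Qed.

Lemma h2_scal c (w : R[i]) k : h2inner (comb c) (fun a => w * szego (z k) a) = w^* * Gv c k.
Proof.
have -> : (fun a => w * szego (z k) a) = comb (fun l => w * (l == k)%:R).
  apply: funext => a; rewrite /comb (bigD1 k) //= eqxx mulr1 big1 ?addr0 //.
  by move=> l /negbTE ->; rewrite mulr0 mul0r.
rewrite ip_comb (bigD1 k) //= eqxx mulr1 big1 ?addr0 //.
by move=> l /negbTE ->; rewrite mulr0 rmorph0 mul0r.
Qed.

Lemma QZ_comb c : QZ z (comb c).
Proof. by exists c. Qed.

Lemma QZ_szego k : QZ z (szego (z k)).
Proof. by rewrite szego_comb; exact: QZ_comb. Qed.

Lemma Sz_spec i c : exists e, Sz z i (comb c) = comb e /\ forall k, Gv e k = z k i * Gv c k.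
Proof.
have [e0 he0] := Gsolve (fun k => z k i * Gv c k).
pose P := fun p : coef R n => QZ z p /\
  (forall q, QZ z q -> h2inner (fun a => Tz i (comb c) a - p a) q = 0).
have Pe0 : P (comb e0).
  split; first exact: QZ_comb.
  move=> q [d ->].
  change (h2inner (fun a => Tz i (comb c) a - comb e0 a) (comb d) = 0).
  by rewrite ipT big1 // => k _; rewrite he0 subrr mulr0.
have : P (Sz z i (comb c)) := epsilon_spec _ P (ex_intro _ _ Pe0).
move=> [[e he] hperp].
have he' : Sz z i (comb c) = comb e := he.
exists e; split => // k.
have := hperp _ (QZ_szego k); rewrite he' szego_comb ipT sum_delta.
by move/eqP; rewrite subr_eq0 => /eqP ->.
Qed.

Lemma shift_char (F : coef R n) (w : 'I_n -> R[i]) :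
  (forall a i, F (upd a i) = (w i)^* * F a) ->
  forall a, F a = F (fun _ => 0%N) * szego w a.
Proof.
move=> hF a.
have zcase : forall b : mindex n, (forall i, b i = 0%N) -> F b = F (fun _ => 0%N) * szego w b.
  move=> b hb; have -> : b = (fun _ => 0%N) by apply: funext => i; rewrite hb.
  by rewrite /szego big1 ?mulr1 // => i _; rewrite expr0.
move: (leqnn (\sum_i a i)); move: {2}(\sum_i a i) => N.
elim: N a => [|N IH] a ha.
  apply: zcase => i; apply/eqP; rewrite -leqn0; apply: leq_trans ha.
  by rewrite (bigD1 i) //= leq_addr.
case: (pickP (fun i => a i != 0%N)) => [i ai | all0]; last first.
  by apply: zcase => i; apply/eqP; move: (all0 i) => /negbFE.
pose b : mindex n := fun l => if l == i then (a l).-1 else a l.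
have sab : (\sum_l a l = (\sum_l b l).+1)%N.
  rewrite (bigD1 i) //= [in RHS](bigD1 i) //= /b eqxx -addSn prednK ?lt0n //.
  by congr (_ + _)%N; apply: eq_bigr => l /negbTE ->.
have ab : a = upd b i.
  apply: funext => l; rewrite /upd /b; case: eqP => [-> | _] //.
  by rewrite prednK // lt0n.
have hb : (\sum_l b l <= N)%N by rewrite -ltnS -sab.
rewrite ab hF (IH b hb) szego_upd; ring.
Qed.

Variable X : coef R n -> coef R n.
Hypothesis hX : is_op_QZ z X.

Lemma Xlin2 c f g h : QZ z f -> QZ z g -> (forall a, h a = c * f a + g a) ->
  X h = fun a => c * X f a + X g a.
Proof.
move=> Qf Qg e; have -> : h = (fun a => c * f a + g a) by apply: funext.
by case: hX => _ Xl; apply: Xl.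
Qed.

Lemma Q0 : QZ z (fun _ : mindex n => 0).
Proof.
exists (fun _ => 0); apply: funext => a; rewrite big1 // => j _; exact: mul0r.
Qed.

Lemma X0 : X (fun _ => 0) = (fun _ => 0).
Proof.
have E := @Xlin2 (-1) _ _ (fun _ => 0) Q0 Q0 (fun a => etrans (esym (addr0 _)) (congr1 (fun x => x + 0) (esym (mulr0 _)))).
apply: funext => a; rewrite {1}E /= mulN1r addNr //.
Qed.

Lemma X_comb c : X (comb c) = fun a => \sum_j c j * X (szego (z j)) a.
Proof.
suff H : forall r : seq 'I_m,
    X (comb (fun l => \sum_(j <- r) c j * (j == l)%:R)) =
    fun a => \sum_(j <- r) c j * X (szego (z j)) a.
  have := H (index_enum 'I_m).
  have -> // : comb (fun l => \sum_(j <- index_enum 'I_m) c j * (j == l)%:R) = comb c.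
  apply: comb_ext => l; rewrite (bigD1 l) //= eqxx mulr1 big1 ?addr0 //.
  by move=> j /negbTE ->; rewrite mulr0.
elim => [|j r IH].
  have -> : comb (fun l => \sum_(j <- [::]) c j * (j == l)%:R) = fun _ => 0.
    apply: funext => a; rewrite /comb big1 // => l _; by rewrite big_nil mul0r.
  by rewrite X0; apply: funext => a; rewrite big_nil.
rewrite (@Xlin2 (c j) (szego (z j)) (comb (fun l => \sum_(j0 <- r) c j0 * (j0 == l)%:R))).
- by apply: funext => a; rewrite IH big_cons.
- exact: QZ_szego.
- exact: QZ_comb.
move=> a; rewrite /comb; under eq_bigr do rewrite big_cons mulrDl.
rewrite big_split /=; congr (_ + _).
rewrite (bigD1 j) //= eqxx mulr1 big1 ?addr0 //.
by move=> l; rewrite eq_sym => /negbTE ->; rewrite mulr0 mul0r.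
Qed.

Definition XM (M : 'I_m -> 'I_m -> R[i]) c := fun l => \sum_j c j * M j l.

Lemma X_combM M (hM : forall j, X (szego (z j)) = comb (M j)) c :
  X (comb c) = comb (XM M c).
Proof.
rewrite X_comb; apply: funext => a; rewrite /comb /XM.
under eq_bigr => j _ do rewrite hM /comb mulr_sumr.
rewrite exchange_big; apply: eq_bigr => l _; rewrite mulr_suml.
by apply: eq_bigr => j _; rewrite mulrA.
Qed.

Lemma Gv_XM M c k : Gv (XM M c) k = \sum_j c j * Gv (M j) k.
Proof.
rewrite /Gv /XM; under eq_bigr do rewrite mulr_suml.
rewrite exchange_big; apply: eq_bigr => j _; rewrite mulr_sumr.
by apply: eq_bigr => l _; rewrite mulrA.
Qed.


Lemma adj_spec M (hM : forall j, X (szego (z j)) = comb (M j)) k :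
  QZ z (adjQZ z X (szego (z k))) /\
  forall c, Gv (XM M c) k = h2inner (comb c) (adjQZ z X (szego (z k))).
Proof.
have [y hy] := Gsolve_col (fun j => Gv (M j) k).
pose P := fun h : coef R n => QZ z h /\
  (forall f, QZ z f -> h2inner (X f) (szego (z k)) = h2inner f h).
have Py : P (comb y).
  split; first exact: QZ_comb.
  move=> f [c ->].
  change (h2inner (X (comb c)) (szego (z k)) = h2inner (comb c) (comb y)).
  rewrite (X_combM hM) -Gv_h2 Gv_XM ip_comb.
  under eq_bigr => j _ do rewrite -hy.
  rewrite /Gv; under eq_bigr do rewrite mulr_sumr.
  rewrite exchange_big; apply: eq_bigr => l _; rewrite mulr_sumr.
  by apply: eq_bigr => j _; ring.
have : P (adjQZ z X (szego (z k))) := epsilon_spec _ P (ex_intro _ _ Py).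
move=> [Q hf]; split => // c.
rewrite -hf; last exact: QZ_comb.
by rewrite (X_combM hM) -Gv_h2.
Qed.

Lemma main_iff :
  (forall i : 'I_n, forall f, QZ z f -> X (Sz z i f) = Sz z i (X f)) <->
  (exists w : 'I_m -> R[i], forall j : 'I_m,
     adjQZ z X (szego (z j)) = (fun a => w j * szego (z j) a)).
Proof.
have [XQ _] := hX.
have /fin_all_exists [M hM] : forall j, exists d, X (szego (z j)) = comb d.
  move=> j; have [d hd] := XQ _ (QZ_szego j); by exists d.
split.
- move=> H.
  exists (fun j => adjQZ z X (szego (z j)) (fun _ => 0%N)) => k.
  have [[y hy] hadj] := adj_spec hM k.
  have hy' : adjQZ z X (szego (z k)) = comb y := hy.
  have step : forall a i, comb y (upd a i) = (z k i)^* * comb y a.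
    move=> a i.
    pose u := fun l => y l * ((z l i)^* - (z k i)^*).
    have key : forall c, \sum_l (u l)^* * Gv c l = 0.
      move=> c.
      have [e [he hGe]] := Sz_spec i c.
      have [e' [he' hGe']] := Sz_spec i (XM M c).
      have := H i (comb c) (QZ_comb c).
      rewrite he (X_combM hM) (X_combM hM) he' => E.
      have := congr1 (fun F => h2inner F (szego (z k))) E.
      rewrite /= -!Gv_h2 hGe' !hadj hy' !ip_comb.
      have -> : \sum_l (y l)^* * Gv e l = \sum_l (y l)^* * (z l i * Gv c l).
        by apply: eq_bigr => l _; rewrite hGe.
      move=> E2.
      rewrite /u.
      have -> : \sum_l ((y l * ((z l i)^* - (z k i)^*))^* * Gv c l) =
        \sum_l (y l)^* * (z l i * Gv c l) - z k i * \sum_l (y l)^* * Gv c l.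
        rewrite mulr_sumr -sumrB; apply: eq_bigr => l _.
        rewrite rmorphM rmorphB /= !conjCK; ring.
      by rewrite E2 subrr.
    have := comb_zero (c := u) _ a.
    rewrite ip_comb key => /(_ erefl).
    rewrite /u -Dop_comb /Dop => /eqP; rewrite subr_eq0 => /eqP //.
  rewrite hy'; apply: funext => a.
  exact: shift_char step a.
- move=> [w hw] i f [c ->].
  change (X (Sz z i (comb c)) = Sz z i (X (comb c))).
  have [e [he hGe]] := Sz_spec i c.
  have [e' [he' hGe']] := Sz_spec i (XM M c).
  rewrite he (X_combM hM) (X_combM hM) he'.
  apply: funext => a; apply/eqP; rewrite -subr_eq0; apply/eqP.
  rewrite -comb_sub; apply: Gv_zero => l.
  rewrite Gv_sub hGe' !(proj2 (adj_spec hM l)) hw !h2_scal hGe; ring.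
Qed.

End B.

Theorem lemma6p3 (R : realType) (n m : nat) (z : 'I_m -> 'I_n -> R[i])
  (X : coef R n -> coef R n) :
  (0 < n)%N ->
  injective z ->
  (forall j, in_polydisc (z j)) ->
  is_op_QZ z X ->
  (forall i : 'I_n, forall f, QZ z f -> X (Sz z i f) = Sz z i (X f)) <->
  (exists w : 'I_m -> R[i], forall j : 'I_m,
     adjQZ z X (szego (z j)) = (fun a => w j * szego (z j) a)).
Proof.
move=> n0 zinj hz hX.
exact: (main_iff hz n0 zinj hX).
Qed.
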